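(* Let $N\ge 1$, $E=\{0,1,\dots,N\}$, and let $Q$ be the tridiagonal matrix on $E$ described in the context, with $a_i>0$ $(1\le i\le N)$, $b_i>0$ $(0\le i\le N-1)$, $c_i\ge 0$ $(0\le i\le N)$ and $c_N>0$; set $b_N:=c_N$. Fix $z\in\mathbb R$ and $v\in\mathbb R^{N+1}$, and define $\alpha^{(i)}_\ell$, $G^{(i)}_{\ell,k}$, $M_{N-1}$ and $N_n$ as in the context. Suppose $D:=c_N-z+M_{N-1}(c_\cdot-z)\neq 0$, where $c_\cdot-z$ denotes the vector $(c_j-z)_{j\in E}$. Then the equation $Qw+zw=-v$ has a unique solution $w=(w_n)_{n\in E}$, given by $$w_n=\frac{v_N+M_{N-1}(v)}{c_N-z+M_{N-1}(c_\cdot-z)}\bigl[1+N_{n-1}(c_\cdot-z)\bigr]-N_{n-1}(v),\qquad 0\le n\le N.$$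
   Context: The matrix $Q=(q_{ij})_{i,j\in E}$ is tridiagonal with: $q_{00}=-(b_0+c_0)$, $q_{01}=b_0$; for $1\le n\le N-1$: $q_{n,n-1}=a_n$, $q_{nn}=-(a_n+b_n+c_n)$, $q_{n,n+1}=b_n$; $q_{N,N-1}=a_N$, $q_{NN}=-(a_N+c_N)$; all other entries are $0$. Convention: $b_N:=c_N$. For fixed $i$ with $0\le i\le N-1$ and $1\le \ell\le N-i$ define $\alpha^{(i)}_1=(c_{i+1}-z+a_{i+1})/b_{i+1}$ and $\alpha^{(i)}_\ell=(c_{i+\ell}-z)/b_{i+\ell}$ for $2\le\ell\le N-i$. Define $G^{(i)}_{\ell,1}=\alpha^{(i)}_\ell$ for $\ell=1,\dots,N-i$, and recursively for $k=2,\dots,N-i$: $G^{(i)}_{\ell,k}=G^{(i)}_{\ell,k-1}+\alpha^{(i+k-1)}_{\ell-k+1}\,G^{(i)}_{k-1,k-1}$ for $\ell=k,k+1,\dots,N-i$. Set $G^{(j)}_{0,0}=1$ for all $j$. For a vector $h=(h_j)_{j\in E}$ define $M_{N-1}(h)=c_N\sum_{j=0}^{N-1}\frac{h_j}{b_j}G^{(j)}_{N-j,N-j}$, $N_n(h)=\sum_{j=0}^{n}\frac{h_j}{b_j}\sum_{k=0}^{n-j}G^{(j)}_{k,k}$ for $0\le n<N$, and $N_{-1}(h)=0$. *)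

(* Defs.v *)
From HB Require Import structures.
From mathcomp Require Import all_boot all_order all_algebra.
Set Implicit Arguments. Unset Strict Implicit. Unset Printing Implicit Defensive.
Import Order.TTheory GRing.Theory Num.Theory.
Local Open Scope ring_scope.

Section Defs.
Variables (R : realFieldType) (N : nat) (a b c : nat -> R) (z : R).

Definition bN (n : nat) : R := if n == N then c N else b n.

Definition Qmat : 'M[R]_(N.+1) :=
  \matrix_(i < N.+1, j < N.+1)
    if ((j : nat).+1 == i) then a i
    else if (j : nat) == i then
      - ((if (i : nat) == 0%N then 0 else a i)
         + (if (i : nat) == N then 0 else b i) + c i)
    else if (j : nat) == i.+1 then b i
    else 0.

Definition alpha (i l : nat) : R :=
  if l == 1%N then (c (i + 1) - z + a (i + 1)) / bN (i + 1)
  else (c (i + l) - z) / bN (i + l).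

(* G^{(i)}_{l,k}; with G_{0,0} = 1 and G_{l,0} = 0 for l >= 1 the recursion
   gives G_{l,1} = alpha^{(i)}_l and
   G_{l,k} = G_{l,k-1} + alpha^{(i+k-1)}_{l-k+1} G_{k-1,k-1}. *)
Fixpoint G (i l k : nat) : R :=
  match k with
  | 0 => if l == 0%N then 1 else 0
  | k'.+1 => G i l k' + alpha (i + k') (l - k') * G i k' k'
  end.

Definition MN1 (h : nat -> R) : R :=
  c N * \sum_(j < N) h j / b j * G j (N - j) (N - j).

(* Nprev h m = N_{m-1}(h); i.e. N_n(h) = Nprev h n.+1 and N_{-1}(h) = Nprev h 0 = 0. *)
Definition Nprev (h : nat -> R) (m : nat) : R :=
  \sum_(j < m) h j / b j * \sum_(k < (m - j)%N) G j k k.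

End Defs.

(* Main.v *)
Require Import Defs.
From HB Require Import structures.
From mathcomp Require Import all_boot all_order all_algebra.
From mathcomp Require Import zify ring.
Import Order.TTheory GRing.Theory Num.Theory.
Local Open Scope ring_scope.
Set Implicit Arguments. Unset Strict Implicit. Unset Printing Implicit Defensive.

Lemma G_unfold (R : realFieldType) N (a b c : nat -> R) z i l k :
  G N a b c z i l k = (if l == 0%N then 1 else 0) +
     \sum_(m < k) alpha N a b c z (i + m) (l - m) * G N a b c z i m m.
Proof.
elim: k => [|k IH]; first by rewrite big_ord0 addr0.
by rewrite [LHS]/= IH big_ord_recr /= addrA.
Qed.

Lemma G_diag (R : realFieldType) N (a b c : nat -> R) z i l : (0 < l)%N ->
  G N a b c z i l l = ((c (i + l)%N - z) * \sum_(m < l) G N a b c z i m m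
     + a (i + l)%N * G N a b c z i l.-1 l.-1) / bN N b c (i + l).
Proof.
case: l => // l _; rewrite G_unfold /= add0r big_ord_recr /= subSnn.
rewrite (eq_bigr (fun m : 'I_l => (c (i+l.+1)%N - z) / bN N b c (i + l.+1) * G N a b c z i m m)); last first.
  move=> m _; rewrite /alpha; have hm := ltn_ord m.
  have -> : (l.+1 - m == 1)%N = false by apply/eqP; lia.
  by have -> : (i + m + (l.+1 - m) = i + l.+1)%N by lia.
rewrite /alpha eqxx addn1 -addnS big_ord_recr /= -mulr_sumr.
ring.
Qed.

Definition Uf (R : realFieldType) N (a b c : nat -> R) z (h : nat -> R) n :=
  \sum_(j < n.+1) h j / b j * G N a b c z j (n - j) (n - j).
Definition Up (R : realFieldType) N (a b c : nat -> R) z (h : nat -> R) n :=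
  \sum_(j < n) h j / b j * G N a b c z j (n - j) (n - j).

Lemma P_step (R : realFieldType) N (a b c : nat -> R) z h n :
  Nprev N a b c z h n.+1 = Nprev N a b c z h n + Uf N a b c z h n.
Proof.
rewrite /Nprev /Uf big_ord_recr /= subSnn big_ord1 /=.
rewrite [in RHS]big_ord_recr /= subnn addrA; congr (_ + _).
rewrite -big_split; apply eq_bigr => j _.
by rewrite subSn ?(ltnW (ltn_ord j)) // big_ord_recr /= mulrDr.
Qed.

Lemma Uf_Up (R : realFieldType) N (a b c : nat -> R) z h n :
  Uf N a b c z h n = Up N a b c z h n + h n / b n.
Proof. by rewrite /Uf /Up big_ord_recr /= subnn mulr1. Qed.

Lemma Up_step (R : realFieldType) N (a b c : nat -> R) z h n :
  Up N a b c z h n.+1 = ((c n.+1 - z) * Nprev N a b c z h n.+1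
     + a n.+1 * Uf N a b c z h n) / bN N b c n.+1.
Proof.
rewrite /Up /Nprev /Uf !mulr_sumr -big_split mulr_suml; apply eq_bigr => j _.
have hj := ltn_ord j.
rewrite G_diag ?subn_gt0 //.
have -> : (j + (n.+1 - j) = n.+1)%N by lia.
have -> : ((n.+1 - j).-1 = n - j)%N by lia.
rewrite /=. ring. Qed.

Definition rowexpr (R : realFieldType) N (a b c : nat -> R) z (wf : nat -> R) (i : nat) : R :=
  (if i == 0%N then 0 else a i * wf i.-1)
  - ((if i == 0%N then 0 else a i) + (if i == N then 0 else b i) + c i) * wf i
  + (if i == N then 0 else b i * wf i.+1) + z * wf i.

Definition Wf (R : realFieldType) N (a b c : nat -> R) z (vf : nat -> R) x n :=
  x * (1 + Nprev N a b c z (fun j => c j - z) n) - Nprev N a b c z vf n.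

Lemma Nprev0 (R : realFieldType) N (a b c : nat -> R) z h : Nprev N a b c z h 0 = 0.
Proof. by rewrite /Nprev big_ord0. Qed.

Lemma Up0 (R : realFieldType) N (a b c : nat -> R) z h : Up N a b c z h 0 = 0.
Proof. by rewrite /Up big_ord0. Qed.

Lemma rowA (R : realFieldType) N (a b c : nat -> R) z vf x i :
  (i < N)%N -> b i != 0 -> rowexpr N a b c z (Wf N a b c z vf x) i = - vf i.
Proof.
move=> iN bi; rewrite /rowexpr /Wf.
have -> : (i == N) = false by apply/eqP; lia.
case: i iN bi => [|i] iN bi.
  rewrite eqxx !P_step !Uf_Up !Up0 !Nprev0; field; exact: bi.
have bNi : bN N b c i.+1 = b i.+1 by rewrite /bN; have -> : (i.+1 == N) = false by apply/eqP; lia.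
rewrite /= !P_step !(Uf_Up _ _ _ _ _ _ i.+1) !Up_step bNi !P_step.
field; exact: bi.
Qed.

Lemma rowB (R : realFieldType) N (a b c : nat -> R) z vf x :
  (0 < N)%N -> c N != 0 ->
  (rowexpr N a b c z (Wf N a b c z vf x) N = - vf N) <->
  (x * (c N - z + MN1 N a b c z (fun j => c j - z)) = vf N + MN1 N a b c z vf).
Proof.
move=> N0 cN.
have E : rowexpr N a b c z (Wf N a b c z vf x) N + vf N =
   - (x * (c N - z + MN1 N a b c z (fun j => c j - z)) - (vf N + MN1 N a b c z vf)).
  rewrite /rowexpr /Wf /MN1 eqxx.
  case: N N0 cN => // N _ cN /=.
  rewrite -/(Up N.+1 a b c z vf N.+1) -/(Up N.+1 a b c z (fun j => c j - z) N.+1) !Up_step.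
  have -> : bN N.+1 b c N.+1 = c N.+1 by rewrite /bN eqxx.
  rewrite !P_step; field; exact: cN.
split => H.
  have := E; rewrite H addNr => /eqP; rewrite eq_sym oppr_eq0 subr_eq0 => /eqP //.
apply/eqP; rewrite -subr_eq0 opprK E H subrr oppr0 //.
Qed.

Lemma rowC (R : realFieldType) N (a b c : nat -> R) z (f g : nat -> R) :
  (forall i, (i < N)%N -> b i != 0) ->
  (forall i, (i < N)%N -> rowexpr N a b c z f i = rowexpr N a b c z g i) ->
  f 0%N = g 0%N -> forall n, (n <= N)%N -> f n = g n.
Proof.
move=> bnz hr h0.
suff H : forall n, (n <= N)%N -> forall m, (m <= n)%N -> f m = g m.
  by move=> n hn; apply: (H n hn n).
elim=> [_ m|n IH hn m hm]; first by rewrite leqn0 => /eqP ->.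
rewrite leq_eqVlt in hm; case/orP: hm => [/eqP ->|hm]; last by apply: IH; lia.
have IHn := IH (ltnW hn).
have e1 := IHn n (leqnn n). have e0 := IHn n.-1 (leq_pred n).
have := hr n hn; rewrite /rowexpr e1 e0.
have -> : (n == N) = false by apply/eqP; lia.
by move/addIr/addrI/(mulfI (bnz n hn)).
Qed.

Lemma row_congr (R : realFieldType) N (a b c : nat -> R) z (f g : nat -> R) :
  (forall m, (m <= N)%N -> f m = g m) ->
  forall i, (i <= N)%N -> rowexpr N a b c z f i = rowexpr N a b c z g i.
Proof.
move=> e i iN; rewrite /rowexpr (e i iN) (e i.-1) ?(leq_trans (leq_pred i) iN) //.
have [//|iN'] := eqVneq i N.
by rewrite (e i.+1) //; lia.
Qed.

Lemma sum_ind (R : realFieldType) n m (F : nat -> R) :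
  \sum_(k < n) ((k : nat) == m)%:R * F k = if (m < n)%N then F m else 0.
Proof.
elim: n => [|n IH]; first by rewrite big_ord0.
rewrite big_ord_recr /= IH.
have [mn|nm|->] := ltngtP m n.
- by rewrite ltnS (ltnW mn) mul0r addr0.
- by rewrite ltnS leqNgt nm mul0r addr0.
- by rewrite ltnSn mul1r add0r.
Qed.

Lemma sum_ind1 (R : realFieldType) n m (F : nat -> R) :
  \sum_(k < n) ((k : nat).+1 == m)%:R * F k =
     if (0 < m)%N && (m.-1 < n)%N then F m.-1 else 0.
Proof.
case: m => [|m]; last by rewrite /= -sum_ind; apply: eq_bigr => k _; rewrite eqSS.
by rewrite big1 // => k _; rewrite mul0r.
Qed.

Lemma mat_row (R : realFieldType) N (a b c : nat -> R) z (w : 'cV[R]_N.+1) (i : 'I_N.+1) :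
  (Qmat N a b c *m w + z *: w) i 0 = rowexpr N a b c z (fun j => w (inord j) 0) i.
Proof.
set wf := fun j : nat => w (inord j) 0.
set Dg := - ((if (i : nat) == 0%N then 0 else a i)
         + (if (i : nat) == N then 0 else b i) + c i).
rewrite !mxE.
rewrite (eq_bigr (fun j : 'I_N.+1 => ((j : nat).+1 == i)%:R * (a i * wf j)
   + ((j : nat) == i)%:R * (Dg * wf j) + ((j : nat) == i.+1)%:R * (b i * wf j))); last first.
  move=> j _; rewrite mxE /wf inord_val -/Dg.
  case: ((j : nat).+1 =P i) => h1; case: ((j : nat) =P i) => h2;
    case: ((j : nat) =P i.+1) => h3;
    rewrite /= ?mul1r ?mul0r ?addr0 ?add0r //; exfalso; lia.
rewrite big_split big_split /= (sum_ind1 _ _ (fun k => a i * wf k)) (sum_ind _ _ (fun k => Dg * wf k)) (sum_ind _ _ (fun k => b i * wf k)) /rowexpr /Dg.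
have hi := ltn_ord i.
rewrite /wf inord_val -/wf ltn_ord.
have -> : (i.-1 < N.+1)%N = true by apply/idP; lia.
rewrite lt0n ltnS.
have [i0|i0] := eqVneq (i:nat) 0%N; have [iN|iN] := eqVneq (i:nat) N;
  rewrite /= ?iN ?ltnn ?addr0 ?add0r ?mulNr //;
  by have -> : (i < N)%N = true by apply/idP; lia.
Qed.

Unset Implicit Arguments.

Theorem mainTheorem1 (R : realFieldType) (N : nat) (a b c : nat -> R)
  (z : R) (v : 'cV[R]_(N.+1)) :
  (1 <= N)%N ->
  (forall i, (1 <= i <= N)%N -> 0 < a i) ->
  (forall i, (i <= N.-1)%N -> 0 < b i) ->
  (forall i, (i <= N)%N -> 0 <= c i) ->
  0 < c N ->
  let vf := fun j : nat => v (inord j) 0 in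
  let cz := fun j : nat => c j - z in
  let D := c N - z + MN1 N a b c z cz in
  D != 0 ->
  (exists! w : 'cV[R]_(N.+1), Qmat N a b c *m w + z *: w = - v) /\
  (forall w : 'cV[R]_(N.+1), Qmat N a b c *m w + z *: w = - v ->
     forall n : 'I_(N.+1),
       w n 0 = (vf N + MN1 N a b c z vf) / D * (1 + Nprev N a b c z cz n)
               - Nprev N a b c z vf n).
Proof.
move=> N1 apos bpos cnn cNpos vf cz D Dnz.
have bnz : forall i, (i < N)%N -> b i != 0.
  by move=> i hi; apply: lt0r_neq0; apply: bpos; lia.
have cN : c N != 0 by exact: lt0r_neq0.
set K := (vf N + MN1 N a b c z vf) / D.
have rowsP : forall w : 'cV[R]_N.+1, Qmat N a b c *m w + z *: w = - v <->
   forall i, (i <= N)%N -> rowexpr N a b c z (fun j => w (inord j) 0) i = - vf i.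
  move=> w; split => [H i iN | H].
    have := congr1 (fun M : 'cV[R]_N.+1 => M (inord i) 0) H.
    by rewrite mat_row inordK // mxE.
  apply/matrixP => i j; rewrite ord1 mat_row H; last by rewrite -ltnS.
  by rewrite mxE /vf inord_val.
set w0 := \col_(i < N.+1) Wf N a b c z vf K i.
have w0E : forall m, (m <= N)%N -> w0 (inord m) 0 = Wf N a b c z vf K m.
  by move=> m hm; rewrite mxE inordK.
have sol0 : Qmat N a b c *m w0 + z *: w0 = - v.
  apply/rowsP => i iN.
  rewrite (@row_congr _ _ a b c z _ (Wf N a b c z vf K) w0E) //.
  have [ilt|ieq] : (i < N)%N \/ i = N by lia.
    by apply: rowA => //; exact: bnz.
  subst i; apply/(@rowB _ _ a b c z vf K N1 cN).
  by rewrite /K; apply: divfK.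
have form : forall w : 'cV[R]_N.+1, Qmat N a b c *m w + z *: w = - v ->
    forall n, (n <= N)%N -> w (inord n) 0 = Wf N a b c z vf K n.
  move=> w /rowsP H.
  set f := fun j : nat => w (inord j) 0.
  have eq1 : forall n, (n <= N)%N -> f n = Wf N a b c z vf (f 0%N) n.
    apply: (@rowC _ _ a b c z _ _ bnz).
      move=> i hi; rewrite H ?(ltnW hi) // rowA //; exact: bnz.
    by rewrite /Wf !Nprev0 addr0 mulr1 subr0.
  have f0 : f 0%N = K.
    have := H N (leqnn N); rewrite (@row_congr _ _ a b c z _ (Wf N a b c z vf (f 0%N)) eq1) //.
    move/(@rowB _ _ a b c z vf (f 0%N) N1 cN) => Hx.
    apply/(mulIf Dnz); rewrite /K divfK //.
  by move=> n hn; rewrite -/(f n) eq1 // f0.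
split.
  exists w0; split; first exact: sol0.
  move=> w Hw; apply/matrixP => i j; rewrite ord1.
  have hi : (i <= N)%N by rewrite -ltnS.
  by rewrite -(inord_val i) (form w Hw) // w0E.
move=> w Hw n.
have hn : (n <= N)%N by rewrite -ltnS.
have := form w Hw n hn; rewrite inord_val => ->.
by rewrite /Wf /K.
Qed.
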